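(* Let $p,q\ge 2$ be relatively prime integers, and let $\omega_j=e^{2\pi i j/p}$ and $\xi_j=e^{2\pi i j/q}$. Then $$p\sum_{j=1}^{q-1}\frac{\xi_j}{(\xi_j-1)^3(\xi_j^p-1)}+q\sum_{j=1}^{p-1}\frac{\omega_j}{(\omega_j-1)^3(\omega_j^q-1)}=\frac{1}{720}\left(p^4+q^4-5p^2q^2-15p^2q-15pq^2+15p+15q+3\right).$$ *)

(* Defs.v *)
From Stdlib Require Import Reals.
From mathcomp Require Import all_boot all_algebra complex.
From mathcomp Require Import Rstruct.
Set Implicit Arguments. Unset Strict Implicit. Unset Printing Implicit Defensive.
Import GRing.Theory Num.Theory.
Local Open Scope ring_scope.

(* e^{2 pi i j / n} = cos(2 pi j/n) + i sin(2 pi j/n) *)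
Definition root_e (n j : nat) : R[i] :=
  Complex (Rtrigo_def.cos (2 * PI * INR j / INR n)%R)
          (Rtrigo_def.sin (2 * PI * INR j / INR n)%R).

(* Main.v *)
Require Import Defs.
From Stdlib Require Import Reals Lra Lia Psatz.
From mathcomp Require Import all_boot all_algebra complex.
From mathcomp Require Import Rstruct ring.
Set Implicit Arguments. Unset Strict Implicit. Unset Printing Implicit Defensive.
Import GRing.Theory Num.Theory.
Definition ang (n j : nat) : R := (2 * PI * INR j / INR n)%R.
Open Scope R_scope.
Lemma angE n j : ang n j = 2 * PI * INR j / INR n.
Proof. rewrite /ang. reflexivity. Qed.
Lemma ang_neq1 n k : (0 < k)%nat -> (k < n)%nat ->
  cos (ang n k) = 1 -> sin (ang n k) = 0 -> False.
Proof.
move=> k0 kn hc hs. rewrite angE in hc hs.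
set x := 2 * PI * INR k / INR n in hc hs.
have hn : 0 < INR n by apply: lt_0_INR; lia.
have hk : 0 < INR k by apply: lt_0_INR; lia.
have hkn : INR k < INR n by apply: lt_INR; lia.
have hxn : x * INR n = 2 * PI * INR k by rewrite /x /Rdiv Rmult_assoc Rinv_l ?Rmult_1_r //; lra.
have hpi := PI_RGT_0.
have h0 : 0 < x by nra.
have h2 : x < 2 * PI by nra.
case: (Rtotal_order x PI) => [hl|[he|hg]].
- have := sin_gt_0 _ h0 hl. lra.
- move: hc; rewrite he cos_PI. lra.
- have := sin_lt_0 _ hg h2. lra.
Qed.
Lemma ang_nn n : (0 < n)%nat -> ang n n = 2 * PI.
Proof. move=> n0; rewrite angE /Rdiv Rmult_assoc Rinv_r ?Rmult_1_r //. apply: not_0_INR; lia. Qed.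
Close Scope R_scope.

Local Open Scope ring_scope.

Lemma root_eE n j : root_e n j = Complex (cos (ang n j)) (sin (ang n j)).
Proof. by []. Qed.

Lemma angS n j : ang n j.+1 = ang n j + ang n 1.
Proof. rewrite /ang S_INR /=. have -> : Rplus (INR j) (IZR 1) = INR j + 1 by []. have -> : IZR 1 = 1 by []. by rewrite -mulrDl mulrDr mulr1. Qed.

Lemma root_eS n j : root_e n j.+1 = root_e n j * root_e n 1.
Proof.
rewrite !root_eE angS cos_plus sin_plus /=.
congr Complex; by rewrite [RHS]addrC.
Qed.

Lemma root_e0 n : root_e n 0 = 1.
Proof.
rewrite root_eE /ang /=. rewrite mulr0 mul0r cos_0 sin_0. by [].
Qed.

Lemma root_eX n j : root_e n j = root_e n 1 ^+ j.
Proof. elim: j => [|j IH]; first by rewrite root_e0. by rewrite root_eS IH exprSr. Qed.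

Lemma root_en n : (0 < n)%N -> root_e n n = 1.
Proof. move=> n0; rewrite root_eE ang_nn // cos_2PI sin_2PI. by []. Qed.

Lemma root_e_neq1 n k : (0 < k)%N -> (k < n)%N -> root_e n k != 1.
Proof.
move=> k0 kn; apply/eqP; rewrite root_eE => [[hc hs]]. exact: (@ang_neq1 n k k0 kn hc hs).
Qed.

Lemma root_e_prim n : (0 < n)%N -> n.-primitive_root (root_e n 1).
Proof.
move=> n0; apply/andP; split => //; apply/forallP => i.
rewrite unity_rootE -root_eX.
case: (eqVneq i.+1 n) => [->|hne]; first by rewrite root_en // !eqxx.
apply/eqP/negbTE/root_e_neq1 => //.
by rewrite ltn_neqAle hne ltn_ord.
Qed.


Section Lag.
Variable F : fieldType.
Implicit Types rs : seq F.
Definition Pl rs (r : F) : {poly F} := \prod_(s <- rs | s != r) ('X - s%:P).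
Lemma Pl_root rs r s : s \in rs -> s != r -> (Pl rs r).[s] = 0.
Proof.
move=> srs sr; rewrite /Pl horner_prod; apply/eqP; rewrite prodf_seq_eq0.
by apply/hasP; exists s => //; rewrite sr hornerXsubC subrr eqxx.
Qed.

Lemma Pl_neq0 rs r : (Pl rs r).[r] != 0.
Proof.
rewrite /Pl horner_prod prodf_seq_neq0; apply/allP => s _; apply/implyP => sr.
by rewrite hornerXsubC subr_eq0 eq_sym.
Qed.

Lemma size_Pl rs r : (size (Pl rs r) <= (size rs).+1)%N.
Proof.
rewrite /Pl -big_filter size_prod_XsubC ltnS size_filter; exact: count_size.
Qed.

Lemma size_Pl_mem rs r : uniq rs -> r \in rs -> size (Pl rs r) = size rs.
Proof.
move=> u rr; rewrite /Pl -big_filter size_prod_XsubC size_filter.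
have := count_predC (pred1 r) rs; rewrite count_uniq_mem // rr.
have -> : count (predC (pred1 r)) rs = count (fun s => s != r) rs by [].
move=> <-. by rewrite add1n.
Qed.

Lemma lagrange rs : uniq rs -> rs != [::] ->
  \sum_(r <- rs) (Pl rs r).[r]^-1 *: Pl rs r = 1.
Proof.
move=> u ne; apply/eqP; rewrite -subr_eq0; apply/eqP.
apply: (@roots_geq_poly_eq0 _ _ rs) => //.
- apply/allP => s srs; rewrite rootE hornerD hornerN hornerC horner_sum.
  rewrite (bigD1_seq s) //= hornerZ mulVf ?Pl_neq0 // big1 ?addr0 ?subrr //.
  by move=> r hr; rewrite hornerZ (Pl_root (r:=r) srs) ?mulr0 // eq_sym.
- apply: leq_trans (size_add _ _) _; rewrite size_opp size_poly1 geq_max.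
  apply/andP; split; last first.
    by case: rs u ne.
  apply: leq_trans (size_sum _ _ _) _; apply/bigmax_leqP_seq => r rr _.
  by rewrite (leq_trans (size_scale_leq _ _)) // size_Pl_mem.
Qed.


Definition sh (p : {poly F}) := p \Po ('X + 1).
Definition Tr (r : F) : {poly F} :=
  (1 - r)^-1 *: \sum_(k < 5) ((- (1 - r)^-1) *: 'X) ^+ k.
Definition Uc rs : {poly F} := \sum_(r <- rs) (Pl rs r).[r]^-1 *: Tr r.
Definition Ep rs : {poly F} := \prod_(r <- rs) ('X - r%:P).

Lemma Tr_mul r : r != 1 -> Tr r * ('X + (1 - r)%:P) = 1 - (- (1 - r)^-1) ^+ 5 *: 'X^5.
Proof.
move=> r1; set a := 1 - r; set b := - a^-1.
have a0 : a != 0 by rewrite subr_eq0 eq_sym.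
have -> : 'X + a%:P = a *: (1 - b *: 'X).
  rewrite scalerBr scalerA /b mulrN mulfV // scaleN1r opprK alg_polyC addrC //.
rewrite /Tr -/a -/b -scalerAl -scalerAr scalerA mulVf // scale1r mulrC.
rewrite -exprZn -[in RHS](expr1n _ 5%N) subrXX; congr (_ * _); apply: eq_bigr => i _; by rewrite expr1n mul1r. Qed.

Lemma sh_XsubC r : sh ('X - r%:P) = 'X + (1 - r)%:P.
Proof. by rewrite /sh comp_polyB comp_polyX comp_polyC -addrA -polyCB. Qed.

Lemma UE rs : uniq rs -> rs != [::] -> all (fun r => r != 1) rs ->
  exists W, Uc rs * sh (Ep rs) = 1 - 'X^5 * W.
Proof.
move=> u ne h1.
exists (\sum_(r <- rs) ((Pl rs r).[r]^-1 * (- (1 - r)^-1) ^+ 5) *: sh (Pl rs r)).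
rewrite /Uc mulr_suml mulr_sumr.
have <- : sh (\sum_(r <- rs) (Pl rs r).[r]^-1 *: Pl rs r) = 1.
  by rewrite lagrange // /sh comp_polyC.
rewrite /sh linear_sum /= -sumrB; apply: eq_big_seq => r rr.
rewrite /Ep (bigD1_seq r) //= -/(Pl rs r) comp_polyM.
have -> : ('X - r%:P) \Po ('X + 1) = 'X + (1 - r)%:P := sh_XsubC r.
rewrite -scalerAl mulrA Tr_mul; last by move/allP: h1 => /(_ r rr).
rewrite mulrBl mul1r comp_polyZ scalerBr; congr (_ - _).
by rewrite -scalerAl -scalerAr scalerA.
Qed.


Lemma coef_UE rs i : uniq rs -> rs != [::] -> all (fun r => r != 1) rs -> (i < 5)%N ->
  (Uc rs * sh (Ep rs))`_i = (i == 0)%:R.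
Proof.
move=> u ne h1 i5; have [W ->] := UE u ne h1.
by rewrite coefB coef1 coefXnM i5 subr0.
Qed.

Lemma coefTr4 r : (Tr r)`_4 = ((1 - r) ^+ 5)^-1.
Proof.
rewrite /Tr coefZ coef_sum !big_ord_recr big_ord0 /= !exprZn !coefZ !coefXn /=.
by rewrite !mulr0 !addr0 add0r mulr1 -exprVn; ring.
Qed.

Lemma coef_U4 rs : (Uc rs)`_4 = \sum_(r <- rs) (Pl rs r).[r]^-1 * ((1 - r) ^+ 5)^-1.
Proof. rewrite /Uc coef_sum; apply: eq_bigr => r _; by rewrite coefZ coefTr4. Qed.

Lemma sh_exp p n : sh (p ^+ n) = sh p ^+ n.
Proof.
elim: n => [|n IH]; first by rewrite !expr0 /sh -polyC1 comp_polyC.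
by rewrite exprSr /sh comp_polyM -/(sh (p ^+ n)) -/(sh p) IH exprSr.
Qed.

Lemma Pl_eval rs r n (R0 : {poly F}) : uniq rs -> r \in rs -> r ^+ n = 1 ->
  Ep rs * ('X - 1) ^+ 2 = ('X^n - 1) * R0 ->
  (Pl rs r).[r] * (r - 1) ^+ 2 = n%:R * r ^+ n.-1 * R0.[r].
Proof.
move=> u rr rn hE.
have hX : 'X^n - 1 = ('X - r%:P) * \sum_(i < n) 'X ^+ (n.-1 - i) * r%:P ^+ i.
  by rewrite -subrXX -rmorphXn /= rn polyC1.
move: hE; rewrite /Ep (bigD1_seq r) //= -/(Pl rs r) hX -!mulrA.
move/(mulfI (negbT (polyXsubC_eq0 r))) => /(congr1 (fun P => P.[r])).
rewrite !hornerE horner_sum => ->; congr (_ * _).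
rewrite (eq_bigr (fun _ => r ^+ n.-1)); last first.
  move=> i _; rewrite hornerM hornerXn -rmorphXn hornerC -exprD subnK //.
  by case: n i {rn hX} => [[]|n] //= i; rewrite -ltnS.
rewrite sumr_const card_ord; exact: (esym (mulr_natl _ _)).
Qed.

Fixpoint Bp (n : nat) : {poly F} := if n is n'.+1 then ('X + 1) * Bp n' + 1 else 0.

Lemma XBp n : 'X * Bp n = ('X + 1) ^+ n - 1.
Proof.
elim: n => [|n IH] /=; first by rewrite mulr0 expr0 subrr.
by rewrite mulrDr mulrCA IH mulr1 exprS; ring.
Qed.

Lemma coefBp n k : (Bp n)`_k = ('C(n, k.+1))%:R.
Proof.
elim: n k => [|n IH] k /=; first by rewrite coef0.
rewrite coefD coef1 mulrDl mul1r coefD coefXM !IH.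
case: k => [|k] /=; first by rewrite !bin1 add0r natr1.
by rewrite addr0 binS natrD addrC.
Qed.

Lemma sh_Ep rs p q : Ep rs * ('X - 1) ^+ 2 = ('X^q - 1) * ('X^p - 1) ->
  sh (Ep rs) = Bp p * Bp q.
Proof.
move=> h.
have hX : sh ('X - 1) = 'X by rewrite -polyC1 sh_XsubC subrr addr0.
have hXn n : sh ('X^n - 1) = 'X * Bp n.
  by rewrite XBp /sh comp_polyB -/(sh 'X^n) sh_exp /sh comp_polyX comp_polyC.
have := congr1 sh h; rewrite /sh comp_polyM -/(sh _) -/(sh (_ ^+ 2)) sh_exp hX.
rewrite [sh (_ * _)]/sh comp_polyM -/(sh ('X^q - 1)) -/(sh ('X^p - 1)) !hXn -/(sh (Ep rs)) => e.
have X2 : ('X : {poly F}) ^+ 2 != 0 by rewrite expf_neq0 // polyX_eq0.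
apply: (mulIf X2).
by rewrite e; ring.
Qed.
End Lag.

Section Alg.
Variable F : numFieldType.

Lemma bin2E n : ('C(n, 2))%:R * 2 = n%:R * (n%:R - 1) :> F.
Proof. elim: n => [|n IH]; first by rewrite bin0n /= !mul0r. rewrite binS natrD mulrDl IH bin1 -natr1. ring. Qed.
Lemma bin3E n : ('C(n, 3))%:R * 6 = n%:R * (n%:R - 1) * (n%:R - 2) :> F.
Proof. elim: n => [|n IH]; first by rewrite bin0n /= !mul0r. rewrite binS natrD mulrDl IH.
have h := bin2E n. rewrite -[n.+1%:R]natr1. 
have -> : 'C(n, 2)%:R * 6 = 'C(n, 2)%:R * 2 * 3 :> F by ring.
rewrite h. ring. Qed.
Lemma bin4E n : ('C(n, 4))%:R * 24 = n%:R * (n%:R - 1) * (n%:R - 2) * (n%:R - 3) :> F.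
Proof. elim: n => [|n IH]; first by rewrite bin0n /= !mul0r. rewrite binS natrD mulrDl IH.
have h := bin3E n. rewrite -[n.+1%:R]natr1. 
have -> : 'C(n, 3)%:R * 24 = 'C(n, 3)%:R * 6 * 4 :> F by ring.
rewrite h. ring. Qed.
Lemma bin5E n : ('C(n, 5))%:R * 120 = n%:R * (n%:R - 1) * (n%:R - 2) * (n%:R - 3) * (n%:R - 4) :> F.
Proof. elim: n => [|n IH]; first by rewrite bin0n /= !mul0r. rewrite binS natrD mulrDl IH.
have h := bin4E n. rewrite -[n.+1%:R]natr1. 
have -> : 'C(n, 4)%:R * 120 = 'C(n, 4)%:R * 24 * 5 :> F by ring.
rewrite h. ring. Qed.

Lemma binE2 n : ('C(n, 2))%:R = n%:R * (n%:R - 1) / 2 :> F.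
Proof. by rewrite -bin2E mulfK // pnatr_eq0. Qed.
Lemma binE3 n : ('C(n, 3))%:R = n%:R * (n%:R - 1) * (n%:R - 2) / 6 :> F.
Proof. by rewrite -bin3E mulfK // pnatr_eq0. Qed.
Lemma binE4 n : ('C(n, 4))%:R = n%:R * (n%:R - 1) * (n%:R - 2) * (n%:R - 3) / 24 :> F.
Proof. by rewrite -bin4E mulfK // pnatr_eq0. Qed.
Lemma binE5 n : ('C(n, 5))%:R = n%:R * (n%:R - 1) * (n%:R - 2) * (n%:R - 3) * (n%:R - 4) / 120 :> F.
Proof. by rewrite -bin5E mulfK // pnatr_eq0. Qed.

Lemma final_alg (p q : nat) (u e : nat -> F) : (0 < p)%N -> (0 < q)%N ->
  (forall k, e k = \sum_(j < k.+1) ('C(p, j.+1))%:R * ('C(q, (k - j).+1))%:R) ->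
  (forall k, (k < 5)%N -> \sum_(j < k.+1) u j * e (k - j)%N = (k == 0)%:R) ->
  - (p%:R * q%:R) * u 4%N = (p%:R ^+ 4 + q%:R ^+ 4 - 5 * p%:R ^+ 2 * q%:R ^+ 2
      - 15 * p%:R ^+ 2 * q%:R - 15 * p%:R * q%:R ^+ 2
      + 15 * p%:R + 15 * q%:R + 3) / 720.
Proof.
move=> p0 q0 he hu.
have e0 := he 0%N; have e1 := he 1%N; have e2 := he 2%N; have e3 := he 3%N; have e4 := he 4%N.
have u0 := hu 0%N isT; have u1 := hu 1%N isT; have u2 := hu 2%N isT; have u3 := hu 3%N isT; have u4 := hu 4%N isT.
rewrite !big_ord_recr !big_ord0 /= !add0r ?subn0 in e0 e1 e2 e3 e4 u0 u1 u2 u3 u4.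
rewrite ?subSS ?subn0 ?subnn in u0 u1 u2 u3 u4.
rewrite !bin1 !binE2 !binE3 !binE4 !binE5 in e0 e1 e2 e3 e4.
rewrite e0 e1 e2 e3 e4 in u0 u1 u2 u3 u4. clear e0 e1 e2 e3 e4 he hu.
set P := p%:R in u0 u1 u2 u3 u4 *; set Q := q%:R in u0 u1 u2 u3 u4 *.
have P0 : P != 0 by rewrite pnatr_eq0 -lt0n.
have Q0 : Q != 0 by rewrite pnatr_eq0 -lt0n.
have PQ0 : P * Q != 0 by rewrite mulf_neq0.
have solve (x y : F) : x * (P * Q) + y = 0 -> x = - y / (P * Q).
  by move=> h; apply: (mulIf PQ0); rewrite mulfVK // ; apply/eqP; rewrite -addr_eq0 h.
have hu0 : u 0%N = (P * Q)^-1 by apply: (mulIf PQ0); rewrite mulVf // u0.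
move: u1 u2 u3 u4.
set E1 := (P * (Q * (Q - 1) / 2) + P * (P - 1) / 2 * Q).
set E2 := (P * (Q * (Q - 1) * (Q - 2) / 6) + P * (P - 1) / 2 * (Q * (Q - 1) / 2) +
     P * (P - 1) * (P - 2) / 6 * Q).
set E3 := (P * (Q * (Q - 1) * (Q - 2) * (Q - 3) / 24) +
     P * (P - 1) / 2 * (Q * (Q - 1) * (Q - 2) / 6) +
     P * (P - 1) * (P - 2) / 6 * (Q * (Q - 1) / 2) +
     P * (P - 1) * (P - 2) * (P - 3) / 24 * Q).
set E4 := (P * (Q * (Q - 1) * (Q - 2) * (Q - 3) * (Q - 4) / 120) +
     P * (P - 1) / 2 * (Q * (Q - 1) * (Q - 2) * (Q - 3) / 24) +
     P * (P - 1) * (P - 2) / 6 * (Q * (Q - 1) * (Q - 2) / 6) +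
     P * (P - 1) * (P - 2) * (P - 3) / 24 * (Q * (Q - 1) / 2) +
     P * (P - 1) * (P - 2) * (P - 3) * (P - 4) / 120 * Q).
move=> u1 u2 u3 u4.
have hu1 : u 1%N = - (u 0%N * E1) / (P * Q) by apply: solve; rewrite addrC.
have hu2 : u 2%N = - (u 0%N * E2 + u 1%N * E1) / (P * Q) by apply: solve; rewrite addrC.
have hu3 : u 3%N = - (u 0%N * E3 + u 1%N * E2 + u 2%N * E1) / (P * Q) by apply: solve; rewrite addrC.
have hu4 : u 4%N = - (u 0%N * E4 + u 1%N * E3 + u 2%N * E2 + u 3%N * E1) / (P * Q) by apply: solve; rewrite addrC.
rewrite hu4 hu3 hu2 hu1 hu0 /E1 /E2 /E3 /E4.
field. by apply/andP.
Qed.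
End Alg.

Section Spec.
Variable F : numFieldType.
Variables (p q : nat) (z w : F).
Hypotheses (hp : (2 <= p)%N) (hq : (2 <= q)%N) (cop : coprime p q).
Hypotheses (zq : q.-primitive_root z) (wp : p.-primitive_root w).

Lemma pow_neq1 n (x : F) j : n.-primitive_root x -> (0 < j)%N -> (j < n)%N -> x ^+ j != 1.
Proof.
move=> px j0 jn; rewrite -(prim_order_dvd px); apply/negP => /(dvdn_leq j0).
by rewrite leqNgt jn.
Qed.

Lemma pow_neq1' n m (x : F) j : n.-primitive_root x -> coprime n m ->
  (0 < j)%N -> (j < n)%N -> (x ^+ j) ^+ m != 1.
Proof.
move=> px c j0 jn; rewrite -exprM -(prim_order_dvd px) Gauss_dvdl //.
apply/negP => /(dvdn_leq j0). by rewrite leqNgt jn.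
Qed.

Lemma pow_inj n (x : F) : n.-primitive_root x ->
  {in index_iota 1 n &, injective (fun j => x ^+ j)}.
Proof.
move=> px i j; rewrite !mem_index_iota => /andP[_ hi] /andP[_ hj] /eqP.
by rewrite (eq_prim_root_expr px) !modn_small // => /eqP.
Qed.

Definition rs := [seq z ^+ j | j <- index_iota 1 q] ++ [seq w ^+ j | j <- index_iota 1 p].

Lemma rs_uniq : uniq rs.
Proof.
rewrite cat_uniq (map_inj_in_uniq (pow_inj zq)) (map_inj_in_uniq (pow_inj wp)) !iota_uniq /=.
rewrite andbT; apply/hasPn => x /mapP[k hk ->]; apply/mapP => [[j hj]] e.
move: hk hj; rewrite !mem_index_iota => /andP[k0 kp] /andP[j0 jq].
have : (w ^+ k) ^+ q != 1 by exact: (pow_neq1' wp cop k0 kp).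
by rewrite e -exprM mulnC exprM (prim_expr_order zq) expr1n eqxx.
Qed.

Lemma rs_ne : rs != [::].
Proof. by rewrite /rs; case: q hq => [|[|n]]. Qed.

Lemma rs_neq1 : all (fun r => r != 1) rs.
Proof.
rewrite all_cat !all_map; apply/andP; split; apply/allP => j;
  rewrite mem_index_iota => /andP[j0 jn] /=; first [exact: (pow_neq1 zq j0 jn) | exact: (pow_neq1 wp j0 jn)].
Qed.

Lemma rs_E : Ep rs * ('X - 1) ^+ 2 = ('X^q - 1) * ('X^p - 1).
Proof.
rewrite -(factor_Xn_sub_1 zq) -(factor_Xn_sub_1 wp).
have q0 : (0 < q)%N by apply: leq_trans hq.
have p0 : (0 < p)%N by apply: leq_trans hp.
rewrite (big_ltn q0) (big_ltn p0) !expr0 /Ep big_cat !big_map /=.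
set A := \prod_(_ <- _) _; set B := \prod_(_ <- _) _.
rewrite polyC1 expr2. move: A B => A B. ring.
Qed.



Lemma term_eq r n m : r ^+ n = 1 -> r != 1 -> r ^+ m != 1 -> (0 < n)%N ->
  (Pl rs r).[r] * (r - 1) ^+ 2 = n%:R * r ^+ n.-1 * (r ^+ m - 1) ->
  (Pl rs r).[r]^-1 * ((1 - r) ^+ 5)^-1 = - (n%:R)^-1 * (r / ((r - 1) ^+ 3 * (r ^+ m - 1))).
Proof.
move=> rn r1 rm n0 h.
have r0 : r != 0 by apply/eqP => e; move/eqP: rn; rewrite e expr0n eqn0Ngt n0 /= eq_sym oner_eq0.
have hs : r ^+ n.-1 = r^-1.
  by apply: (mulIf r0); rewrite mulVf // -exprSr prednK.
have r1' : r - 1 != 0 by rewrite subr_eq0.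
have rm' : r ^+ m - 1 != 0 by rewrite subr_eq0.
have n0' : (n%:R : F) != 0 by rewrite pnatr_eq0 -lt0n.
have hP : (Pl rs r).[r] = n%:R * r^-1 * (r ^+ m - 1) / (r - 1) ^+ 2.
  by rewrite -hs -h mulfK // expf_neq0.
rewrite hP. set t := r ^+ m. field.
by rewrite r0 rm' r1' n0'; rewrite -[1 - r]opprB oppr_eq0 r1'.
Qed.

Lemma main_gen : p%:R * (\sum_(1 <= j < q) z ^+ j / ((z ^+ j - 1) ^+ 3 * ((z ^+ j) ^+ p - 1)))
  + q%:R * (\sum_(1 <= j < p) w ^+ j / ((w ^+ j - 1) ^+ 3 * ((w ^+ j) ^+ q - 1)))
  = ((p%:R ^+ 4 + q%:R ^+ 4 - 5 * p%:R ^+ 2 * q%:R ^+ 2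
      - 15 * p%:R ^+ 2 * q%:R - 15 * p%:R * q%:R ^+ 2
      + 15 * p%:R + 15 * q%:R + 3) / 720).
Proof.
have q0 : (0 < q)%N by apply: leq_trans hq.
have p0 : (0 < p)%N by apply: leq_trans hp.
have he : forall k, (Bp F p * Bp F q)`_k = \sum_(j < k.+1) ('C(p, j.+1))%:R * ('C(q, (k - j).+1))%:R.
  by move=> k; rewrite coefM; apply: eq_bigr => j _; rewrite !coefBp.
have hu : forall k, (k < 5)%N -> \sum_(j < k.+1) (Uc rs)`_j * (Bp F p * Bp F q)`_(k - j)%N = (k == 0)%:R.
  move=> k k5; rewrite -coefM -(sh_Ep rs_E); exact: coef_UE rs_uniq rs_ne rs_neq1 k5.
rewrite -(final_alg (u := fun k => (Uc rs)`_k) p0 q0 he hu) coef_U4.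
have hsplit (G : F -> F) : \sum_(r <- rs) G r =
   \sum_(j <- index_iota 1 q) G (z ^+ j) + \sum_(j <- index_iota 1 p) G (w ^+ j).
  by rewrite big_cat !big_map.
rewrite (hsplit (fun r => (Pl rs r).[r]^-1 * ((1 - r) ^+ 5)^-1)) mulrDr.
have Q0 : (q%:R : F) != 0 by rewrite pnatr_eq0 -lt0n.
have P0 : (p%:R : F) != 0 by rewrite pnatr_eq0 -lt0n.
congr (_ + _); rewrite !mulr_sumr; apply: eq_big_seq => j;
  rewrite mem_index_iota => /andP[j0 jn].
- have rn : (z ^+ j) ^+ q = 1 by rewrite exprAC (prim_expr_order zq) expr1n.
  have rr : z ^+ j \in rs by rewrite mem_cat map_f // mem_index_iota j0.
  have h1 := pow_neq1 zq j0 jn.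
  have h2 : (z ^+ j) ^+ p != 1 by apply: pow_neq1' zq _ j0 jn; rewrite coprime_sym.
  have h3 := Pl_eval (R0 := 'X^p - 1) rs_uniq rr rn rs_E.
  have hR : ('X^p - 1).[z ^+ j] = (z ^+ j) ^+ p - 1 by rewrite !hornerE.
  rewrite hR in h3; rewrite (term_eq rn h1 h2 q0 h3).
  field; rewrite Q0 /=.
  by rewrite !subr_eq0 h1 h2.
- have rn : (w ^+ j) ^+ p = 1 by rewrite exprAC (prim_expr_order wp) expr1n.
  have rr : w ^+ j \in rs by rewrite mem_cat orbC map_f // mem_index_iota j0.
  have h1 := pow_neq1 wp j0 jn.
  have h2 : (w ^+ j) ^+ q != 1 by apply: pow_neq1' wp cop j0 jn.
  have h3 := Pl_eval (R0 := 'X^q - 1) rs_uniq rr rn (etrans rs_E (mulrC _ _)).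
  have hR : ('X^q - 1).[w ^+ j] = (w ^+ j) ^+ q - 1 by rewrite !hornerE.
  rewrite hR in h3; rewrite (term_eq rn h1 h2 p0 h3).
  field; rewrite P0 /=.
  by rewrite !subr_eq0 h1 h2.
Qed.

End Spec.

Theorem mainTheorem9 (p q : nat) (hp : (2 <= p)%N) (hq : (2 <= q)%N)
  (hpq : coprime p q) :
  p%:R * (\sum_(1 <= j < q)
            root_e q j / ((root_e q j - 1) ^+ 3 * (root_e q j ^+ p - 1)))
  + q%:R * (\sum_(1 <= j < p)
            root_e p j / ((root_e p j - 1) ^+ 3 * (root_e p j ^+ q - 1)))
  = ((p%:R ^+ 4 + q%:R ^+ 4 - 5 * p%:R ^+ 2 * q%:R ^+ 2
      - 15 * p%:R ^+ 2 * q%:R - 15 * p%:R * q%:R ^+ 2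
      + 15 * p%:R + 15 * q%:R + 3) / 720 : R[i]).
Proof.
have zq := root_e_prim (leq_trans (isT : (0 < 2)%N) hq).
have wp := root_e_prim (leq_trans (isT : (0 < 2)%N) hp).
rewrite -(main_gen hp hq hpq zq wp).
congr (_ * _ + _ * _); apply: eq_bigr => j _; by rewrite [root_e _ j]root_eX.
Qed.
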